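(* Let $P$ be a poset on $[n]$ with natural labeling. For every $1\le j\le n-1$, the operator $\tau_j$ on $\mathcal{L}(P)$ can be expressed as a product (composite) of extended promotion operators $\partial_1,\dots,\partial_n$.
   Context: $\mathcal{L}(P)=\{\pi\in S_n : i\prec j \Rightarrow \pi^{-1}_i<\pi^{-1}_j\}$ in one-line notation $\pi=\pi_1\cdots\pi_n$. For $1\le i<n$, $\pi\tau_i$ swaps $\pi_i,\pi_{i+1}$ if they are incomparable in $P$ and is $\pi$ otherwise; operators act on the right, $\pi(\sigma\tau)=(\pi\sigma)\tau$. Extended promotion: $\partial_j=\tau_j\tau_{j+1}\cdots\tau_{n-1}$ for $1\le j\le n$. *)

(* Defs.v *)
From mathcomp Require Import all_boot all_order all_fingroup.
Set Implicit Arguments. Unset Strict Implicit. Unset Printing Implicit Defensive.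

(* A poset P on [n] = {1..n} is represented on 'I_n (element i+1 of [n] is
   the ordinal i) by its (reflexive) order relation [le]. *)
Definition is_poset n (le : rel 'I_n) : Prop :=
  [/\ reflexive le, antisymmetric le & transitive le].

Definition natural_labeling n (le : rel 'I_n) : Prop :=
  forall i j : 'I_n, le i j -> i <= j.

(* A permutation pi : {perm 'I_n} is read in one-line notation:
   pi p is the entry at position p (0-based).  pi^-1 i is the position of i. *)
Definition lin_ext n (le : rel 'I_n) (pi : {perm 'I_n}) : Prop :=
  forall i j : 'I_n, i != j -> le i j -> (pi^-1)%g i < (pi^-1)%g j.

(* tau_i (1-based i, 1 <= i < n): swap entries at positions i, i+1 (1-based),
   i.e. 0-based positions i-1 and i, if they are incomparable in P;
   identity otherwise (and identity for out-of-range i). *)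
Definition tau n (le : rel 'I_n) (i : nat) (pi : {perm 'I_n}) : {perm 'I_n} :=
  match (insub i.-1 : option 'I_n), (insub i : option 'I_n) with
  | Some a, Some b =>
      if le (pi a) (pi b) || le (pi b) (pi a) then pi else (tperm a b * pi)%g
  | _, _ => pi
  end.

(* Extended promotion, right action: pi d_j = pi tau_j tau_{j+1} ... tau_{n-1}
   (tau_j applied first).  d_n is the identity. *)
Definition ext_promotion n (le : rel 'I_n) (j : nat) (pi : {perm 'I_n}) :
  {perm 'I_n} :=
  foldl (fun p i => tau le i p) pi (iota j (n - j)).

Definition apply_promotions n (le : rel 'I_n) (ks : seq nat) (pi : {perm 'I_n}) :
  {perm 'I_n} :=
  foldl (fun p k => ext_promotion le k p) pi ks.

(* Main.v *)
Require Import Defs.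
From mathcomp Require Import all_boot all_order all_fingroup.
From mathcomp Require Import zify.
Set Implicit Arguments. Unset Strict Implicit.

Lemma tau_inv n (le : rel 'I_n) i pi : tau le i (tau le i pi) = pi.
Proof.
rewrite /tau; case: (insub i.-1) => [a|] //; case: (insub i) => [b|] //.
case H: (le (pi a) (pi b) || le (pi b) (pi a)); first by rewrite H.
rewrite !permM tpermL tpermR orbC H mulgA tperm2 mul1g //.
Qed.

Lemma tau_inj n (le : rel 'I_n) i : injective (tau le i).
Proof. by move=> x y H; rewrite -(@tau_inv _ le i x) H tau_inv. Qed.

Lemma foldl_tau_inj n (le : rel 'I_n) s :
  injective (fun pi => foldl (fun p i => tau le i p) pi s).
Proof.
elim: s => [|a s IH] x y //= H.
simpl in H.
have H2 := IH _ _ H. apply: (@tau_inj _ le a). exact H2.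
Qed.

Lemma foldl_nseq (T A : Type) (g : T -> A -> T) x k a :
  foldl g x (nseq k a) = iter k (g^~ a) x.
Proof. by elim: k x => [|k IH] x //=; rewrite IH -iterSr. Qed.

Theorem lemma2p2 (n : nat) (le : rel 'I_n) :
  is_poset le -> natural_labeling le ->
  forall j : nat, 1 <= j <= n - 1 ->
  exists ks : seq nat,
    all (fun k => 1 <= k <= n) ks /\
    forall pi : {perm 'I_n}, lin_ext le pi ->
      tau le j pi = apply_promotions le ks pi.
Proof.
move=> _ _ j /andP [j1 jn].
have finj : injective (ext_promotion le j.+1) by exact: foldl_tau_inj.
pose f := perm finj.
pose m := #[f]%g.
exists (j :: nseq m.-1 j.+1); split.
  rewrite /= all_nseq.
  have H1 : 1 <= j <= n by apply/andP; split => //; lia.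
  have H2 : 1 <= j.+1 <= n by apply/andP; split => //; lia.
  by rewrite H1 H2 orbT.
move=> pi _.
have jlt : j < n by lia.
have E : ext_promotion le j pi = f (tau le j pi).
  rewrite permE /ext_promotion.
  have -> : n - j = (n - j.+1).+1 by rewrite subnS prednK // subn_gt0.
  by [].
rewrite /apply_promotions /= foldl_nseq E.
have -> : iter m.-1 (ext_promotion le j.+1) (f (tau le j pi))
         = iter m f (tau le j pi).
  have -> : iter m f (tau le j pi) = iter m.-1 f (f (tau le j pi)).
    by rewrite /m; case: #[f]%g (order_gt0 f) => // k _; rewrite iterSr.
  by apply: eq_iter => x; rewrite permE.
by rewrite -permX expg_order perm1.
Qed.
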